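(* Let $G$ be a graph with at least one edge and let $x$ be a non-isolated vertex of $G$. Then there exists a Z-Grundy dominating sequence of $G$ that contains $x$.
   Context: For a graph $G$, $N(v)$ is the open neighborhood and $N[v]=N(v)\cup\{v\}$ the closed neighborhood of $v$. A sequence $(v_1,\ldots,v_k)$ of distinct vertices is a Z-sequence if $N(v_i)\setminus\bigcup_{j=1}^{i-1}N[v_j]\neq\emptyset$ for each $i\in[k]$. A Z-Grundy dominating sequence is a Z-sequence of maximum possible length in $G$. *)

(* Defs.v *)
(* A finite simple graph is a symmetric irreflexive relation
   e : rel T on a finType T. *)
From mathcomp Require Import all_boot.
Set Implicit Arguments. Unset Strict Implicit. Unset Printing Implicit Defensive.

Section Graph.
Variables (T : finType) (e : rel T).

Definition onbhd (v : T) : {set T} := [set u | e v u].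
Definition cnbhd (v : T) : {set T} := v |: onbhd v.

Definition cnbhd_seq (s : seq T) : {set T} := \bigcup_(v <- s) cnbhd v.

Definition is_Zseq (s : seq T) : bool :=
  uniq s &&
  all (fun i => match s with
                | [::] => true
                | v0 :: _ => onbhd (nth v0 s i) :\: cnbhd_seq (take i s) != set0
                end) (iota 0 (size s)).

Definition is_ZGrundy (s : seq T) : Prop :=
  is_Zseq s /\ forall t : seq T, is_Zseq t -> size t <= size s.
End Graph.

(* Main.v *)
Require Import Defs.
From mathcomp Require Import all_boot.
From mathcomp Require Import zify.
Set Implicit Arguments. Unset Strict Implicit.

Section Aux.
Variables (T : finType) (e : rel T) (x0 : T).
Hypothesis e_sym : symmetric e.

Definition good (s : seq T) i w :=
  e (nth x0 s i) w && all (fun j => w \notin cnbhd e (nth x0 s j)) (iota 0 i).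

Lemma goodP s i w : reflect (e (nth x0 s i) w /\
   forall j, j < i -> w \notin cnbhd e (nth x0 s j)) (good s i w).
Proof.
apply: (iffP andP) => [[h /allP a]|[h a]]; split => //.
  by move=> j ji; apply: a; rewrite mem_iota.
by apply/allP => j; rewrite mem_iota add0n => /andP[_ /a].
Qed.

Definition ZW s ws := size ws = size s /\ forall i, i < size s -> good s i (nth x0 ws i).

Lemma notin_cs t w : (w \notin cnbhd_seq e t) = all (fun v => w \notin cnbhd e v) t.
Proof.
rewrite /cnbhd_seq; elim: t => [|v t IH]; first by rewrite big_nil inE.
by rewrite big_cons in_setU negb_or IH.
Qed.

Lemma in_cn v w : (w \in cnbhd e v) = (w == v) || e v w.
Proof. by rewrite /cnbhd /onbhd in_setU1 inE. Qed.

Lemma step s i y : i < size s ->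
  (onbhd e (nth y s i) :\: cnbhd_seq e (take i s) != set0) = [exists w, good s i w].
Proof.
move=> lt; rewrite (set_nth_default x0) //; apply/idP/idP.
  case/set0Pn => w; rewrite in_setD notin_cs /onbhd inE => /andP[/(all_nthP x0) a h].
  apply/existsP; exists w; apply/goodP; split => // j ji.
  have := a j; rewrite size_takel ?(ltnW lt) // nth_take //; exact.
case/existsP => w /goodP [h a]; apply/set0Pn; exists w.
rewrite in_setD notin_cs /onbhd inE h andbT; apply/(all_nthP x0) => j.
rewrite size_takel ?(ltnW lt) // => ji; rewrite nth_take //; exact: a.
Qed.

Lemma ZW_uniq s ws : ZW s ws -> uniq s.
Proof.
case=> sz H; apply/(uniqP x0) => i j; rewrite !inE => li lj eqij.
apply/eqP; apply: contraT; rewrite neq_ltn => /orP[] lt.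
  have /goodP[h a] := H j lj; have := a i lt; by rewrite in_cn eqij h orbT.
have /goodP[h a] := H i li; have := a j lt; by rewrite in_cn -eqij h orbT.
Qed.

Lemma ZseqP s : is_Zseq e s <-> exists ws, ZW s ws.
Proof.
split.
  case/andP => u; case: s u => [|v s] u a.
    by exists [::]; split => // i.
  pose F i := odflt x0 [pick w | good (v :: s) i w].
  exists (mkseq F (size (v :: s))); split; first by rewrite size_mkseq.
  move=> i li; rewrite nth_mkseq //; have := allP a i; rewrite mem_iota add0n li.
  move=> /(_ isT); rewrite step // => /existsP[w gw].
  rewrite /F; case: pickP => [w' //|/(_ w)]; by rewrite gw.
move=> [ws Z]; apply/andP; split; first exact: ZW_uniq Z.
case: Z => sz H; case: s sz H => [//|v s] sz H.
apply/allP => i; rewrite mem_iota add0n => /= li.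
by rewrite step //; apply/existsP; exists (nth x0 ws i); apply: H.
Qed.
Lemma ZW_rev s ws : ZW s ws -> ZW (rev ws) (rev s).
Proof.
case=> sz H; split; first by rewrite !size_rev sz.
rewrite size_rev sz => i li; apply/goodP.
rewrite (nth_rev _ (_ : i < size ws)); last by rewrite sz.
rewrite (nth_rev _ li) sz.
have la : size s - i.+1 < size s by lia.
have /goodP[h _] := H _ la; split; first by rewrite e_sym.
move=> j ji; rewrite nth_rev; last by rewrite sz; lia.
rewrite sz.
have lb : size s - j.+1 < size s by lia.
have /goodP[_ a] := H _ lb; have := a (size s - i.+1); 
rewrite !in_cn e_sym eq_sym; apply; lia.
Qed.

Lemma ZW_repl s ws x i w : ZW s ws -> x \notin s -> x \notin ws -> i <= size s ->
  e x w -> (forall j, j < i -> w \notin cnbhd e (nth x0 s j)) ->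
  (i < size s -> forall w', e x w' -> exists2 j, j <= i & w' \in cnbhd e (nth x0 s j)) ->
  ZW (set_nth x0 s i x) (set_nth x0 ws i w).
Proof.
case=> sz H xs xws li ew wa mx; split; first by rewrite !size_set_nth sz.
rewrite size_set_nth => p lp; apply/goodP; rewrite !nth_set_nth /=.
case: (ltngtP p i) => pi.
- have ps : p < size s by lia.
  have /goodP[h a] := H p ps; split => // j jp.
  rewrite nth_set_nth /= (ltn_eqF (ltn_trans jp pi)); exact: a.
- have ps : p < size s by lia.
  have /goodP[h a] := H p ps; split => // j jp.
  rewrite nth_set_nth /=; case: eqP => [ji|_]; last exact: a.
  rewrite in_cn negb_or; apply/andP; split.
    apply: contra xws => /eqP <-; apply: mem_nth; by rewrite sz.
  apply/negP => exw; have [k ki] := mx (leq_ltn_trans (leq_trans (ltnW pi) (leqnn _)) ps) _ exw.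
  by have := a k (leq_ltn_trans ki pi) => /negbTE ->.
- subst p; split => // j ji.
  by rewrite nth_set_nth /= (ltn_eqF ji); exact: wa.
Qed.
End Aux.

Theorem proposition3p1 (T : finType) (e : rel T)
  (e_sym : symmetric e) (e_irr : irreflexive e)
  (has_edge : exists u v : T, e u v)
  (x : T) (x_nonisol : exists y : T, e x y) :
  exists s : seq T, is_ZGrundy e s /\ x \in s.
Proof.
have [S ZS maxS] : exists2 S, is_Zseq e S & forall t, is_Zseq e t -> size t <= size S.
  pose P n := [exists t : n.-tuple T, is_Zseq e t].
  have P0 : exists n, P n.
    exists 0; apply/existsP; exists [tuple]; by rewrite /is_Zseq.
  have Pb : forall n, P n -> n <= #|T|.
    move=> n /existsP[t /andP[u _]]; rewrite -(size_tuple t) -(card_uniqP u).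
    exact: max_card.
  case: (ex_maxnP P0 Pb) => n /existsP[t Zt] mx.
  exists t => // t' Zt'; rewrite size_tuple; apply: mx.
  by apply/existsP; exists (in_tuple t').
have grundy : forall s, is_Zseq e s -> size S <= size s -> is_ZGrundy e s.
  move=> s Zs le; split => // t Zt; exact: leq_trans (maxS t Zt) le.
case: (boolP (x \in S)) => xS; first by exists S; split => //; apply: grundy.
have [ws Zw] := (ZseqP e x S).1 ZS.
case: (boolP (x \in ws)) => xw.
  exists (rev ws); split; last by rewrite mem_rev.
  apply: grundy; first by apply/(ZseqP e x); exists (rev S); exact: (@ZW_rev T e x e_sym).
  by rewrite size_rev (proj1 Zw).
pose Q i := (i <= size S) &&
   [exists w, e x w && all (fun j => w \notin cnbhd e (nth x S j)) (iota 0 i)].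
have Q0 : exists i, Q i.
  case: x_nonisol => y xy; exists 0; rewrite /Q leq0n /=.
  by apply/existsP; exists y; rewrite xy.
have Qb : forall i, Q i -> i <= size S by move=> i /andP[].
case: (ex_maxnP Q0 Qb) => i /andP[li /existsP[w /andP[ew /allP wa]]] mx.
have Mx : i < size S -> forall w', e x w' ->
    exists2 j, j <= i & w' \in cnbhd e (nth x S j).
  move=> lt w' xw'.
  have : ~~ Q i.+1 by apply/negP => /mx; rewrite ltnn.
  rewrite /Q lt andTb negb_exists => /forallP /(_ w'); rewrite xw' andTb.
  case/allPn => j; rewrite mem_iota add0n => /andP[_ jl]; rewrite negbK => h.
  by exists j.
have wa' : forall j, j < i -> w \notin cnbhd e (nth x S j).
  by move=> j jl; apply: wa; rewrite mem_iota.
have Zn := @ZW_repl T e x _ _ _ _ _ Zw xS xw li ew wa' Mx.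
exists (set_nth x S i x); split; last first.
  apply/(nthP x); exists i; last by rewrite nth_set_nth /= eqxx.
  by rewrite size_set_nth leq_max leqnn.
apply: grundy; first by apply/(ZseqP e x); eexists; exact: Zn.
by rewrite size_set_nth leq_max leqnn orbT.
Qed.
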